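(* Suppose that for the given $n$, $\theta_{n,1}\ge\theta_{n,2}\ge\cdots\ge\theta_{n,M_n}$. Then $$\min_{\mathbf w\in\mathcal W_n}R_n(\mathbf w)=\mathrm{tr}(\mathbf P_1\boldsymbol\Omega)+\sum_{m=2}^{M_n}\frac{a_m b_m}{a_m+b_m}+\boldsymbol\mu^\top(\mathbf I_n-\mathbf P_{M_n})\boldsymbol\mu,$$ attained at $w_m=\gamma_m-\gamma_{m+1}$ ($m<M_n$), $w_{M_n}=\gamma_{M_n}$, with $\gamma_1=1$ and $\gamma_m=a_m/(a_m+b_m)$ for $m\ge2$; $$\min_{\mathbf w\in\mathcal Q_n}R_n(\mathbf w)=\sum_{m=1}^{M_n}\frac{a_m b_m}{a_m+b_m}+\boldsymbol\mu^\top(\mathbf I_n-\mathbf P_{M_n})\boldsymbol\mu;$$ and consequently $$\min_{\mathcal W_n}R_n-\min_{\mathcal Q_n}R_n=\frac{\{\mathrm{tr}(\mathbf P_1\boldsymbol\Omega)\}^2}{\boldsymbol\mu^\top\mathbf P_1\boldsymbol\mu+\mathrm{tr}(\mathbf P_1\boldsymbol\Omega)}\le\mathrm{tr}(\mathbf P_1\boldsymbol\Omega).$$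
   Context: Fix $n$. Let $\mathbf y=\boldsymbol\mu+\boldsymbol\varepsilon\in\mathbb R^n$ with $\boldsymbol\mu$ deterministic, $E\boldsymbol\varepsilon=\mathbf 0$, $\mathrm{Cov}(\boldsymbol\varepsilon)=\boldsymbol\Omega$ positive definite. Let $\mathbf X$ be a nonstochastic $n\times p$ matrix, integers $0=\nu_0<\nu_1<\cdots<\nu_{M_n}\le p$ with $M_n\ge2$, $\mathbf X_m$ the first $\nu_m$ columns of $\mathbf X$ (full column rank), $\mathbf P_m=\mathbf X_m(\mathbf X_m^\top\mathbf X_m)^{-1}\mathbf X_m^\top$, $\mathbf P_0=\mathbf 0$. For $\mathbf w\in\mathbb R^{M_n}$, $R_n(\mathbf w)=E\|\sum_{m=1}^{M_n}w_m\mathbf P_m\mathbf y-\boldsymbol\mu\|^2$. $\mathcal W_n=\{\mathbf w\in[0,1]^{M_n}:\sum_m w_m=1\}$, $\mathcal Q_n=[0,1]^{M_n}$. Write $a_m=\boldsymbol\mu^\top(\mathbf P_m-\mathbf P_{m-1})\boldsymbol\mu$, $b_m=\mathrm{tr}\{(\mathbf P_m-\mathbf P_{m-1})\boldsymbol\Omega\}$ and $\theta_{n,m}=a_m/(n b_m)$. *)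

(* Defs.v *)
From HB Require Import structures.
From mathcomp Require Import all_boot all_order all_algebra.
From mathcomp Require Import all_classical all_reals all_analysis.
Set Implicit Arguments. Unset Strict Implicit. Unset Printing Implicit Defensive.
Import Order.TTheory GRing.Theory Num.Theory.
Local Open Scope ring_scope.

(* The n x k matrix formed by the first k columns of X : 'M_(n,p)
   (columns beyond p, never used under the hypotheses nu_M <= p, are 0). *)
Definition first_cols (R : realType) (n p k : nat) (X : 'M[R]_(n, p)) : 'M[R]_(n, k) :=
  \matrix_(i < n, j < k)
    (if (insub (val j) : option 'I_p) is Some j' then X i j' else 0).

Definition hat_mx (R : realType) (n p k : nat) (X : 'M[R]_(n, p)) : 'M[R]_n :=
  let A := first_cols k X in A *m invmx (A^T *m A) *m A^T.

Definition Pm (R : realType) (n p : nat) (X : 'M[R]_(n, p)) (nu : nat -> nat)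
  (m : nat) : 'M[R]_n :=
  if m is 0 then 0 else hat_mx (nu m) X.

Definition a_m (R : realType) (n p : nat) (X : 'M[R]_(n, p)) (nu : nat -> nat)
  (mu : 'cV[R]_n) (m : nat) : R :=
  (mu^T *m (Pm X nu m - Pm X nu m.-1) *m mu) 0 0.

Definition b_m (R : realType) (n p : nat) (X : 'M[R]_(n, p)) (nu : nat -> nat)
  (Om : 'M[R]_n) (m : nat) : R :=
  \tr ((Pm X nu m - Pm X nu m.-1) *m Om).

Definition theta (R : realType) (n p : nat) (X : 'M[R]_(n, p)) (nu : nat -> nat)
  (mu : 'cV[R]_n) (Om : 'M[R]_n) (m : nat) : R :=
  a_m X nu mu m / (n%:R * b_m X nu Om m).

Definition yvec (R : realType) d (T : measurableType d) (P : probability T R)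
  (n : nat) (mu : 'cV[R]_n) (eps : 'I_n -> {RV P >-> R}) (om : T) : 'cV[R]_n :=
  mu + \col_i (eps i om).

Definition avg_est (R : realType) (n p : nat) (X : 'M[R]_(n, p)) (nu : nat -> nat)
  (M : nat) (w : nat -> R) (y : 'cV[R]_n) : 'cV[R]_n :=
  \sum_(1 <= m < M.+1) (w m *: (Pm X nu m *m y)).

Definition risk (R : realType) d (T : measurableType d) (P : probability T R)
  (n p : nat) (X : 'M[R]_(n, p)) (nu : nat -> nat) (M : nat)
  (mu : 'cV[R]_n) (eps : 'I_n -> {RV P >-> R}) (w : nat -> R) : \bar R :=
  ('E_P[(fun om => (\sum_(i < n)
         ((avg_est X nu M w (yvec mu eps om) - mu) i 0) ^+ 2)%R)])%E.

(* W_n: weights in [0,1]^M summing to one (only w_1..w_M matter). *)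
Definition inW (R : realType) (M : nat) (w : nat -> R) : Prop :=
  (forall m, (1 <= m <= M)%N -> 0 <= w m <= 1) /\ \sum_(1 <= m < M.+1) w m = 1.

Definition inQ (R : realType) (M : nat) (w : nat -> R) : Prop :=
  forall m, (1 <= m <= M)%N -> 0 <= w m <= 1.

Definition gam (R : realType) (n p : nat) (X : 'M[R]_(n, p)) (nu : nat -> nat)
  (mu : 'cV[R]_n) (Om : 'M[R]_n) (m : nat) : R :=
  if (m <= 1)%N then 1
  else a_m X nu mu m / (a_m X nu mu m + b_m X nu Om m).

Definition wstar (R : realType) (n p : nat) (X : 'M[R]_(n, p)) (nu : nat -> nat)
  (mu : 'cV[R]_n) (Om : 'M[R]_n) (M : nat) (m : nat) : R :=
  if (m < M)%N then gam X nu mu Om m - gam X nu mu Om m.+1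
  else gam X nu mu Om M.

(* Main.v *)
Require Import Defs.
From HB Require Import structures.
From mathcomp Require Import all_boot all_order all_algebra.
From mathcomp Require Import all_classical all_reals all_analysis.
From mathcomp Require Import zify ring lra.
Import Order.TTheory GRing.Theory Num.Theory.
Local Open Scope ring_scope.
Set Implicit Arguments. Unset Strict Implicit. Unset Printing Implicit Defensive.
Section LA.
Variable R : realType.

Lemma rv_sq_eq0 k (u : 'rV[R]_k) : (u *m u^T) 0 0 = 0 -> u = 0.
Proof.
rewrite !mxE => h.
have h' : \sum_(j < k) u 0 j ^+ 2 = 0.
  rewrite -[RHS]h; apply: eq_bigr => l _; rewrite !mxE expr2 //.
have H := psumr_eq0P (fun j _ => sqr_ge0 (u 0 j)) h'.
apply/matrixP => i j; rewrite (ord1 i) mxE.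
by move/eqP: (H j isT); rewrite sqrf_eq0 => /eqP.
Qed.

Lemma gram_unit n m (A : 'M[R]_(n, m)) : \rank A = m -> A^T *m A \in unitmx.
Proof.
move=> rA.
rewrite -row_free_unit; apply/negPn/negP => nf.
have hlt : (\rank (A^T *m A) < m)%N.
  by rewrite ltn_neqAle nf rank_leq_row.
have hK : kermx (A^T *m A) != 0.
  by rewrite -mxrank_eq0 mxrank_ker subn_eq0 -ltnNge.
have [i hi] : exists i, row i (kermx (A^T *m A)) != 0.
  apply/existsP; move: hK; apply: contraR; rewrite negb_exists => /forallP h.
  apply/eqP/row_matrixP => i; rewrite row0; exact/eqP/negbNE/h.
set v := row i _ in hi.
have vS : v *m (A^T *m A) = 0 by rewrite /v -row_mul mulmx_ker row0.
have u0 : v *m A^T = 0.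
  apply: rv_sq_eq0; rewrite trmx_mul trmxK mulmxA -(mulmxA v) vS mul0mx mxE.
  by [].
have rf : row_free A^T by rewrite /row_free mxrank_tr rA.
by move: hi; rewrite -(mulmx_free_eq0 v rf) u0 eqxx.
Qed.

End LA.
Section Proj.
Variables (R : realType) (n p : nat) (X : 'M[R]_(n, p)).

Definition selmx k j : 'M[R]_(k, j) := \matrix_(a < k, b < j) ((a : nat) == b)%:R.

Lemma first_cols_sub j k : (j <= k)%N ->
  first_cols j X = first_cols k X *m selmx k j.
Proof.
move=> hjk; apply/matrixP => i b; rewrite !mxE.
rewrite (bigD1 (widen_ord hjk b)) //= big1 ?addr0.
  by rewrite !mxE eqxx mulr1.
move=> a hab; rewrite !mxE; case: eqP; last by rewrite mulr0.
move=> e; move: hab; have -> : a = widen_ord hjk b by apply: val_inj.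
by rewrite eqxx.
Qed.

Lemma hat_fix k : \rank (first_cols k X) = k ->
  hat_mx k X *m first_cols k X = first_cols k X.
Proof.
move=> rk; rewrite /hat_mx -!mulmxA mulVmx ?mulmx1 //; exact: gram_unit.
Qed.

Lemma hat_sym k : (hat_mx k X)^T = hat_mx k X.
Proof.
by rewrite /hat_mx !trmx_mul trmx_inv trmx_mul trmxK mulmxA.
Qed.

Lemma hat_mul j k : (j <= k)%N -> \rank (first_cols k X) = k ->
  hat_mx k X *m hat_mx j X = hat_mx j X.
Proof.
move=> hjk rk.
have e : hat_mx k X *m first_cols j X = first_cols j X.
  by rewrite (first_cols_sub hjk) mulmxA hat_fix.
have hj : hat_mx j X = first_cols j X *m invmx ((first_cols j X)^T *m first_cols j X)
   *m (first_cols j X)^T by [].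
by rewrite hj !mulmxA e.
Qed.

Lemma hat_rank k : (\rank (hat_mx k X) <= k)%N.
Proof.
rewrite /hat_mx; apply: leq_trans (mxrankM_maxr _ _) _.
by rewrite mxrank_tr rank_leq_col.
Qed.

End Proj.
Lemma tele (V : zmodType) (u : nat -> V) N :
  \sum_(1 <= k < N.+1) (u k - u k.-1) = u N - u 0%N.
Proof.
elim: N => [|N IH]; first by rewrite big_geq // subrr.
by rewrite big_nat_recr //= IH addrC addrA subrK.
Qed.

Section Model.
Variables (R : realType) (n p : nat) (X : 'M[R]_(n, p)) (nu : nat -> nat) (M : nat).
Hypotheses (hnu : forall m, (m < M)%N -> (nu m < nu m.+1)%N)
  (hrank : forall m, (1 <= m <= M)%N -> \rank (first_cols (nu m) X) = nu m).
Local Notation P := (Pm X nu).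

Lemma nu_le j k : (j <= k)%N -> (k <= M)%N -> (nu j <= nu k)%N.
Proof.
elim: k => [|k IH] hjk hkM; first by rewrite leqn0 in hjk; rewrite (eqP hjk).
rewrite leq_eqVlt in hjk; case/orP: hjk => [/eqP -> //|hjk].
apply: leq_trans (IH hjk (ltnW hkM)) _; exact/ltnW/hnu.
Qed.

Lemma P_sym k : (P k)^T = P k.
Proof. by case: k => [|k] /=; [rewrite trmx0 | exact: hat_sym]. Qed.

Lemma P_mulr j k : (j <= k)%N -> (k <= M)%N -> P k *m P j = P j.
Proof.
case: j => [|j] hjk hkM; first by rewrite /= mulmx0.
case: k hjk hkM => [|k] // hjk hkM /=.
by apply: hat_mul; [exact: nu_le | apply: hrank; rewrite hkM].
Qed.

Lemma P_mull j k : (j <= k)%N -> (k <= M)%N -> P j *m P k = P j.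
Proof.
move=> hjk hkM.
by rewrite -[LHS]trmxK trmx_mul !P_sym P_mulr // P_sym.
Qed.

Lemma P_min j k : (j <= M)%N -> (k <= M)%N -> P j *m P k = P (minn j k).
Proof.
move=> hj hk; case: (leqP j k) => h.
  by rewrite P_mull // (minn_idPl h).
by rewrite P_mulr ?(ltnW h) // (minn_idPr (ltnW h)).
Qed.

Definition F k := if (k <= M)%N then P k - P k.-1 else 1%:M - P M.

Lemma F_sym k : (F k)^T = F k.
Proof. by rewrite /F; case: ifP => _; rewrite linearB /= ?trmx1 !P_sym. Qed.

Lemma F_ortho j k : (1 <= j < M.+2)%N -> (1 <= k < M.+2)%N ->
  F j *m F k = if j == k then F j else 0.
Proof.
move=> /andP[j1 jM] /andP[k1 kM]; rewrite /F.
case: (leqP j M) => hj; case: (leqP k M) => hk.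
- rewrite mulmxBl !mulmxBr !P_min //; try lia.
  case: (ltngtP j k) => hjk.
  + have -> : minn j k.-1 = j by lia.
    have -> : minn j.-1 k = j.-1 by lia.
    have -> : minn j.-1 k.-1 = j.-1 by lia.
    by rewrite !subrr.
  + have -> : minn j k.-1 = k.-1 by lia.
    have -> : minn j.-1 k = k by lia.
    have -> : minn j.-1 k.-1 = k.-1 by lia.
    by rewrite !subrr.
  + subst k.
    have -> : minn j j.-1 = j.-1 by lia.
    have -> : minn j.-1 j = j.-1 by lia.
    by rewrite minnn subrr subr0.
- have -> : (j == k) = false by apply/eqP; lia.
  rewrite mulmxBr mulmx1 mulmxBl !P_min //; try lia.
  have -> : minn j M = j by lia.
  have -> : minn j.-1 M = j.-1 by lia.
  by rewrite subrr.
- have -> : (j == k) = false by apply/eqP; lia.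
  rewrite mulmxBl mul1mx mulmxBr !P_min //; try lia.
  have -> : minn M k = k by lia.
  have -> : minn M k.-1 = k.-1 by lia.
  by rewrite subrr.
- have -> : j = k by lia.
  rewrite eqxx mulmxBl mul1mx mulmxBr mulmx1 P_min // minnn.
  by rewrite subrr subr0.
Qed.

Lemma F_sum : \sum_(1 <= k < M.+2) F k = 1%:M.
Proof.
rewrite big_nat_recr //= /F ltnn.
rewrite (eq_big_nat _ _ (F2 := fun k => P k - P k.-1)); last first.
  by move=> k /andP[_ hk]; rewrite ltnS in hk; rewrite hk.
by rewrite tele /= subr0 addrC subrK.
Qed.

End Model.
Lemma abel (R : ringType) (V : lmodType R) (u : nat -> V) (w : nat -> R) N :
  u 0%N = 0 ->
  \sum_(1 <= m < N.+1) w m *: u m =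
  \sum_(1 <= k < N.+1) (\sum_(1 <= m < N.+1 | (k <= m)%N) w m) *: (u k - u k.-1).
Proof.
move=> u0.
under [RHS]eq_bigr => k _ do rewrite big_mkcond scaler_suml.
rewrite [RHS](exchange_big_nat _ _ _ _ _ _ _ (fun k m => (if (k <= m)%N then w m else 0) *: (u k - u k.-1))) /=.
apply: eq_big_nat => m /andP[m1 mN].
rewrite (big_cat_nat _ (n := m.+1)) //=.
rewrite [X in _ + X]big1_seq ?addr0; last first.
  move=> k /andP[_]; rewrite mem_index_iota => /andP[hk _].
  by rewrite leqNgt hk /= scale0r.
rewrite (eq_big_nat _ _ (F2 := fun k => w m *: (u k - u k.-1))); last first.
  by move=> k /andP[_ hk]; rewrite ltnS in hk; rewrite hk.
by rewrite -(scaler_sumr (w m) _ _ (fun i => u i - u i.-1)) tele u0 subr0.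
Qed.

Lemma ortho_sum (R : comRingType) n N0 N1 (F : nat -> 'M[R]_n) (c e : nat -> R) :
  (forall j, (N0 <= j < N1)%N -> (F j)^T = F j) ->
  (forall j k, (N0 <= j < N1)%N -> (N0 <= k < N1)%N ->
     F j *m F k = if j == k then F j else 0) ->
  (\sum_(N0 <= k < N1) c k *: F k)^T *m (\sum_(N0 <= k < N1) e k *: F k) =
  \sum_(N0 <= k < N1) (c k * e k) *: F k.
Proof.
move=> hs ho.
rewrite (raddf_sum (@trmx R n n)) mulmx_suml; apply: eq_big_nat => j hj.
rewrite mulmx_sumr.
rewrite (eq_big_nat _ _ (F2 := fun k => if k == j then (c j * e j) *: F j else 0)); last first.
  move=> k hk; rewrite linearZ /= [(c j *: F j)^T]linearZ /= hs // -scalemxAl ho //.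
  rewrite eq_sym; case: eqP => [->|_]; last by rewrite !scaler0.
  by rewrite scalerA mulrC.
by rewrite -big_mkcond big_nat1_eq hj.
Qed.
Section Prob.
Variables (R : realType) (d : measure_display) (T : measurableType d)
  (P : probability T R).

Lemma E_sum k (F : 'I_k -> T -> R) (r : 'I_k -> R) :
  (forall i, F i \in Lfun P 1) -> (forall i, 'E_P[F i]%E = (r i)%:E) ->
  (fun om => (\sum_i F i om)%R) \in Lfun P 1 /\
  'E_P[fun om => (\sum_i F i om)%R]%E = (\sum_i r i)%:E.
Proof.
elim: k F r => [|k IH] F r hL hE.
  have -> : (fun om => \sum_(i < 0) F i om) = cst 0.
    by apply/funext => om; rewrite big_ord0.
  by rewrite big_ord0 expectation_cst; split => //; exact: Lfun_cst.
have -> : (fun om => \sum_(i < k.+1) F i om) =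
  (fun om => \sum_(i < k) F (widen_ord (leqnSn k) i) om) \+ F ord_max.
  by apply/funext => om; rewrite big_ord_recr.
have [L1 E1] := IH (fun i => F (widen_ord (leqnSn k) i))
  (fun i => r (widen_ord (leqnSn k) i)) (fun i => hL _) (fun i => hE _).
split; first exact: rpredD.
by rewrite expectationD // E1 hE big_ord_recr.
Qed.

Lemma E_scale (f : T -> R) (a r : R) : f \in Lfun P 1 -> 'E_P[f]%E = r%:E ->
  (fun om => a * f om) \in Lfun P 1 /\ 'E_P[fun om => (a * f om)%R]%E = (a * r)%:E.
Proof.
move=> hL hE.
have e : (fun om => a * f om) = a \o* f by apply/funext => om /=; rewrite mulrC.
rewrite e; split; first exact: Lfun_scale.
by rewrite expectationZl // hE.
Qed.

End Prob.
Section Quad.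
Variables (R : realType) (d : measure_display) (T : measurableType d)
  (P : probability T R) (n : nat) (eps : 'I_n -> {RV P >-> R}) (Om : 'M[R]_n).
Hypotheses (h2 : forall i, (eps i : T -> R) \in Lfun P 2)
  (h0 : forall i, 'E_P[eps i]%E = 0%:E)
  (hc : forall i j, covariance P (eps i) (eps j) = (Om i j)%:E).

Lemma eps_L1 i : (eps i : T -> R) \in Lfun P 1.
Proof. by apply: (Lfun_subset12 _ (h2 i)); rewrite fin_num_measure. Qed.

Lemma eps_prod i j : (fun om => (eps i om * eps j om)%R) \in Lfun P 1 /\
  'E_P[fun om => (eps i om * eps j om)%R]%E = (Om i j)%:E.
Proof.
split; first exact: (Lfun2_mul_Lfun1 (h2 i) (h2 j)).
rewrite -hc covariance.unlock !h0 /=; congr expectation.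
by apply/funext => om; rewrite mulrfctE /= !subr0.
Qed.

Lemma G_E (c0 : R) (a : 'I_n -> R) (b : 'I_n -> 'I_n -> R) :
  (fun om => c0 + (\sum_(j < n) a j * eps j om
     + \sum_(j < n) \sum_(k < n) b j k * (eps j om * eps k om)))%R \in Lfun P 1 /\
  'E_P[(fun om => c0 + (\sum_(j < n) a j * eps j om
     + \sum_(j < n) \sum_(k < n) b j k * (eps j om * eps k om)))%R]%E =
  (c0 + (0 + \sum_(j < n) \sum_(k < n) b j k * Om j k))%:E.
Proof.
have [L1 E1] : (fun om => \sum_(j < n) a j * eps j om)%R \in Lfun P 1 /\
   'E_P[(fun om => \sum_(j < n) a j * eps j om)%R]%E = (\sum_(j < n) a j * 0)%:E.
  apply: (E_sum (F := fun j om => a j * eps j om) (r := fun j => a j * 0)).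
    by move=> j; have [] := E_scale (a j) (eps_L1 j) (h0 j).
  by move=> j; have [] := E_scale (a j) (eps_L1 j) (h0 j).
have [L2 E2] : (fun om => \sum_(j < n) \sum_(k < n) b j k * (eps j om * eps k om))%R
     \in Lfun P 1 /\
   'E_P[(fun om => \sum_(j < n) \sum_(k < n) b j k * (eps j om * eps k om))%R]%E
     = (\sum_(j < n) \sum_(k < n) b j k * Om j k)%:E.
  have hj : forall j, (fun om => \sum_(k < n) b j k * (eps j om * eps k om))%R
     \in Lfun P 1 /\
   'E_P[(fun om => \sum_(k < n) b j k * (eps j om * eps k om))%R]%E
     = (\sum_(k < n) b j k * Om j k)%:E.
    move=> j.
    apply: (E_sum (F := fun k om => b j k * (eps j om * eps k om))
      (r := fun k => b j k * Om j k)).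
      by move=> k; have [L E] := eps_prod j k; have [] := E_scale (b j k) L E.
    by move=> k; have [L E] := eps_prod j k; have [] := E_scale (b j k) L E.
  apply: (E_sum (F := fun j om => \sum_(k < n) b j k * (eps j om * eps k om))
      (r := fun j => \sum_(k < n) b j k * Om j k)).
    by move=> j; have [] := hj j.
  by move=> j; have [] := hj j.
have -> : (fun om => c0 + (\sum_(j < n) a j * eps j om
     + \sum_(j < n) \sum_(k < n) b j k * (eps j om * eps k om)))%R =
  cst c0 \+ ((fun om => \sum_(j < n) a j * eps j om)%R \+
    (fun om => \sum_(j < n) \sum_(k < n) b j k * (eps j om * eps k om))%R) by [].
split; first by rewrite !rpredD // Lfun_cst.
rewrite expectationD ?rpredD ?Lfun_cst // expectationD // E1 E2 expectation_cst.
by rewrite big1 ?mulr0 // => j _; rewrite mulr0.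
Qed.

Lemma E_quad (c : 'cV[R]_n) (B : 'M[R]_n) :
  'E_P[fun om => (\sum_(i < n) ((c + B *m \col_j eps j om) i 0) ^+ 2)%R]%E =
  ((c^T *m c) 0 0 + \tr (B *m Om *m B^T))%:E.
Proof.
have -> : (fun om => (\sum_(i < n) ((c + B *m \col_j eps j om) i 0) ^+ 2)%R) =
  (fun om => \sum_(i < n) (c i 0 ^+ 2 + (\sum_(j < n) (2 * c i 0 * B i j) * eps j om
     + \sum_(j < n) (\sum_(k < n) (B i j * B i k) * (eps j om * eps k om))))%R).
  apply/funext => om; apply: eq_bigr => i _.
  rewrite !mxE sqrrD (expr2 (\sum_j _)) mulr_suml -addrA; congr (_ + (_ + _)).
    rewrite -mulr_natr mulr_sumr mulr_suml; apply: eq_bigr => j _.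
    by rewrite !mxE; ring.
  apply: eq_bigr => j _; rewrite mulr_sumr; apply: eq_bigr => k _.
  by rewrite !mxE; ring.
rewrite (proj2 (@E_sum _ _ _ P n (fun i om => (c i 0 ^+ 2 + (\sum_(j < n) (2 * c i 0 * B i j) * eps j om
     + \sum_(j < n) (\sum_(k < n) (B i j * B i k) * (eps j om * eps k om))))%R)
   (fun i => c i 0 ^+ 2 + (0 + \sum_(j < n) \sum_(k < n) B i j * B i k * Om j k)) _ _)).
- congr (_%:E); rewrite big_split; congr (_ + _).
    by rewrite mxE; apply: eq_bigr => i _; rewrite !mxE expr2.
  rewrite /mxtrace; apply: eq_bigr => i _; rewrite add0r [RHS]mxE.
  rewrite [RHS](eq_bigr (fun k => (\sum_(j < n) B i j * Om j k) * B i k)); last first.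
    by move=> k _; rewrite !mxE.
  under [RHS]eq_bigr => k _ do rewrite mulr_suml.
  rewrite [RHS]exchange_big /=; apply: eq_bigr => j _.
  by apply: eq_bigr => k _; ring.
- by move=> i; have [] := G_E (c i 0 ^+ 2) (fun j => 2 * c i 0 * B i j)
    (fun j k => B i j * B i k).
- by move=> i; have [] := G_E (c i 0 ^+ 2) (fun j => 2 * c i 0 * B i j)
    (fun j k => B i j * B i k).
Qed.

End Quad.
Lemma quad_sum (R : comRingType) n N0 N1 (u : 'rV[R]_n) (v : 'cV[R]_n)
  (F : nat -> 'M[R]_n) (x : nat -> R) :
  (u *m (\sum_(N0 <= k < N1) x k *: F k) *m v) 0 0 =
  \sum_(N0 <= k < N1) x k * (u *m F k *m v) 0 0.
Proof.
rewrite mulmx_sumr mulmx_suml summxE; apply: eq_bigr => k _.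
by rewrite -scalemxAr -scalemxAl mxE.
Qed.

Lemma tr_sum (R : comRingType) n N0 N1 (Om : 'M[R]_n)
  (F : nat -> 'M[R]_n) (x : nat -> R) :
  \tr ((\sum_(N0 <= k < N1) x k *: F k) *m Om) =
  \sum_(N0 <= k < N1) x k * \tr (F k *m Om).
Proof.
rewrite mulmx_suml (raddf_sum (@mxtrace R n)); apply: eq_bigr => k _.
rewrite -scalemxAl /mxtrace mulr_sumr; apply: eq_bigr => i _; by rewrite mxE.
Qed.

Section Risk.
Variables (R : realType) (d : measure_display) (T : measurableType d)
  (P : probability T R) (n p M : nat) (X : 'M[R]_(n, p)) (nu : nat -> nat)
  (mu : 'cV[R]_n) (eps : 'I_n -> {RV P >-> R}) (Om : 'M[R]_n).
Hypotheses (h2 : forall i, (eps i : T -> R) \in Lfun P 2)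
  (h0 : forall i, 'E_P[eps i]%E = 0%:E)
  (hc : forall i j, covariance P (eps i) (eps j) = (Om i j)%:E)
  (hnu : forall m, (m < M)%N -> (nu m < nu m.+1)%N)
  (hrank : forall m, (1 <= m <= M)%N -> \rank (first_cols (nu m) X) = nu m).

Lemma risk_formula (w : nat -> R) :
  risk X nu M mu eps w =
  (\sum_(1 <= k < M.+1)
     ((1 - \sum_(1 <= m < M.+1 | (k <= m)%N) w m) ^+ 2 * a_m X nu mu k
      + (\sum_(1 <= m < M.+1 | (k <= m)%N) w m) ^+ 2 * b_m X nu Om k)
   + (mu^T *m (1%:M - Pm X nu M) *m mu) 0 0)%:E.
Proof.
set g := fun k => \sum_(1 <= m < M.+1 | (k <= m)%N) w m.
set A := \sum_(1 <= m < M.+1) w m *: Pm X nu m.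
have eA : forall y, avg_est X nu M w y = A *m y.
  by move=> y; rewrite /avg_est /A mulmx_suml; apply: eq_bigr => m _; rewrite scalemxAl.
rewrite /risk.
have -> : (fun om => (\sum_(i < n)
         ((avg_est X nu M w (yvec mu eps om) - mu) i 0) ^+ 2)%R) =
  (fun om => (\sum_(i < n) ((A *m mu - mu + A *m \col_j eps j om) i 0) ^+ 2)%R).
  apply/funext => om; apply: eq_bigr => i _.
  by rewrite eA /yvec mulmxDr addrAC.
rewrite (E_quad h2 h0 hc); congr (_%:E).
set G := fun k => if (k <= M)%N then g k else 0.
have hA : A = \sum_(1 <= k < M.+2) G k *: F X nu M k.
  rewrite big_nat_recr //= /G ltnn scale0r addr0 /A.
  rewrite (abel _ _ (u := Pm X nu)) //.
  apply: eq_big_nat => k /andP[_ hk]; rewrite ltnS in hk.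
  by rewrite /F hk.
have hA1 : A - 1%:M = \sum_(1 <= k < M.+2) (G k - 1) *: F X nu M k.
  under eq_bigr => k _ do rewrite scalerBl scale1r.
  by rewrite sumrB -hA F_sum.
have Fs : forall j, (1 <= j < M.+2)%N -> (F X nu M j)^T = F X nu M j.
  by move=> j _; exact: F_sym.
have Fo := F_ortho hnu hrank.
have hAT : A^T = A.
  rewrite hA (raddf_sum (@trmx R n n)); apply: eq_bigr => k _.
  apply/matrixP => i j; rewrite !mxE.
  by have := F_sym X nu M k => /matrixP /(_ i j); rewrite mxE => ->.
have -> : A *m mu - mu = (A - 1%:M) *m mu by rewrite mulmxBl mul1mx.
have -> : (((A - 1%:M) *m mu)^T *m ((A - 1%:M) *m mu)) 0 0 =
   (mu^T *m ((A - 1%:M)^T *m (A - 1%:M)) *m mu) 0 0 by rewrite trmx_mul !mulmxA.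
have -> : \tr (A *m Om *m A^T) = \tr ((A^T *m A) *m Om).
  by rewrite hAT mxtrace_mulC mulmxA.
rewrite hA1 (ortho_sum _ _ Fs Fo) quad_sum hA (ortho_sum _ _ Fs Fo) tr_sum.
rewrite big_nat_recr //= [X in _ + X = _]big_nat_recr //= /G /F ltnn !mul0r addr0.
rewrite big_split /= sub0r mulrNN mulr1 mul1r addrAC.
congr (_ + _); congr (_ + _).
  apply: eq_big_nat => k /andP[_ hk]; rewrite ltnS in hk; rewrite hk /a_m.
  by rewrite -/(g k); ring.
apply: eq_big_nat => k /andP[_ hk]; rewrite ltnS in hk; rewrite hk /b_m.
by rewrite -/(g k); ring.
Qed.
End Risk.
Section Pos.
Variables (R : realType) (n p : nat) (X : 'M[R]_(n, p)) (nu : nat -> nat) (M : nat)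
  (mu : 'cV[R]_n) (Om : 'M[R]_n).
Hypotheses (hnu : forall m, (m < M)%N -> (nu m < nu m.+1)%N)
  (hrank : forall m, (1 <= m <= M)%N -> \rank (first_cols (nu m) X) = nu m)
  (hpd : forall x : 'cV[R]_n, x != 0 -> 0 < (x^T *m Om *m x) 0 0).
Local Notation P := (Pm X nu).

Lemma P_rank j : (\rank (P j) <= nu j)%N.
Proof. by case: j => [|j] /=; [rewrite mxrank0 | exact: hat_rank]. Qed.

Lemma D_sym k : (k <= M)%N -> (P k - P k.-1)^T = P k - P k.-1.
Proof. by move=> hk; have := F_sym X nu M k; rewrite /F hk. Qed.

Lemma D_idem k : (1 <= k <= M)%N -> (P k - P k.-1) *m (P k - P k.-1) = P k - P k.-1.
Proof.
move=> /andP[k1 kM]; have := F_ortho hnu hrank (j := k) (k := k).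
by rewrite /F kM eqxx; apply; rewrite k1 /= ltnS ltnW.
Qed.

Lemma D_neq0 k : (1 <= k <= M)%N -> P k - P k.-1 != 0.
Proof.
move=> /andP[k1 kM]; apply/negP; rewrite subr_eq0 => /eqP e.
have rk := hrank (m := k); rewrite k1 kM in rk; have {}rk := rk isT.
have hf := hat_fix rk.
case: k k1 kM rk hf e => [//|k] _ kM rk hf e.
have : (\rank (first_cols (nu k.+1) X) <= nu k)%N.
  rewrite -hf; apply: leq_trans (mxrankM_maxl _ _) _.
  by rewrite -[hat_mx _ X]/(P k.+1) e P_rank.
by rewrite rk leqNgt hnu.
Qed.

Lemma b_pos k : (1 <= k <= M)%N -> 0 < b_m X nu Om k.
Proof.
move=> hk; rewrite /b_m; set D := P k - P k.-1.
have Ds : D^T = D by apply: D_sym; case/andP: hk.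
have Di : D *m D = D by apply: D_idem.
have -> : \tr (D *m Om) = \sum_i ((row i D) *m Om *m (row i D)^T) 0 0.
  rewrite -{1}Di -mulmxA mxtrace_mulC -{2}Ds /mxtrace; apply: eq_bigr => i _.
  rewrite [RHS]mxE [LHS]mxE; apply: eq_bigr => j _.
  by rewrite -row_mul !mxE.
have [i hi] : exists i, row i D != 0.
  apply/existsP; move: (D_neq0 hk); apply: contraR; rewrite negb_exists => /forallP h.
  apply/eqP/row_matrixP => i; rewrite row0; exact/eqP/negbNE/h.
have ge : forall j, 0 <= ((row j D) *m Om *m (row j D)^T) 0 0.
  move=> j; case: (eqVneq (row j D) 0) => [->|hj].
    by rewrite !mul0mx mxE.
  have := hpd (x := (row j D)^T); rewrite trmxK => h; apply/ltW/h.
  by rewrite trmx_eq0.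
rewrite (bigD1 i) //=; apply: ltr_pwDl; last by apply: sumr_ge0 => j _.
have := hpd (x := (row i D)^T); rewrite trmxK; apply.
by rewrite trmx_eq0.
Qed.

Lemma a_ge0 k : (1 <= k <= M)%N -> 0 <= a_m X nu mu k.
Proof.
move=> hk; rewrite /a_m; set D := P k - P k.-1.
have Ds : D^T = D by apply: D_sym; case/andP: hk.
have Di : D *m D = D by apply: D_idem.
have -> : (mu^T *m D *m mu) 0 0 = ((D *m mu)^T *m (D *m mu)) 0 0.
  by rewrite trmx_mul Ds mulmxA -(mulmxA _ D D) Di.
rewrite mxE; apply: sumr_ge0 => j _; rewrite mxE -expr2; exact: sqr_ge0.
Qed.

End Pos.
Lemma quad_lb (R : realType) (a b x : R) : 0 <= a -> 0 < b ->
  a * b / (a + b) <= (1 - x) ^+ 2 * a + x ^+ 2 * b.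
Proof.
move=> ha hb; have hs : 0 < a + b by lra.
rewrite ler_pdivrMr //.
have := sqr_ge0 (x * (a + b) - a); nra.
Qed.

Lemma quad_eq (R : realType) (a b : R) : 0 <= a -> 0 < b ->
  (1 - a / (a + b)) ^+ 2 * a + (a / (a + b)) ^+ 2 * b = a * b / (a + b).
Proof.
move=> ha hb; have hs : a + b != 0 by rewrite gt_eqF //; lra.
by field.
Qed.

Lemma gmono (R : realType) (N a b a' b' : R) : 0 < N -> 0 <= a -> 0 < b -> 0 <= a' -> 0 < b' ->
  a' / (N * b') <= a / (N * b) -> a' / (a' + b') <= a / (a + b).
Proof.
move=> hN ha hb ha' hb' h.
have hNb : 0 < N * b by exact: mulr_gt0.
have hNb' : 0 < N * b' by exact: mulr_gt0.
rewrite ler_pdivrMr ?mulr_gt0 // in h.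
rewrite mulrAC ler_pdivlMr // in h.
rewrite ler_pdivrMr; last lra.
rewrite mulrAC ler_pdivlMr; last lra.
have h2 : a' * b <= a * b'.
  have : a' * (N * b) <= a * (N * b') by [].
  by move=> h3; nra.
nra.
Qed.

Lemma g01 (R : realType) (a b : R) : 0 <= a -> 0 < b -> 0 <= a / (a + b) <= 1.
Proof.
move=> ha hb; have hs : 0 < a + b by lra.
by apply/andP; split; [apply: divr_ge0; lra | rewrite ler_pdivrMr //; lra].
Qed.

Lemma wq_tele (R : realType) (g : nat -> R) M k : (1 <= k <= M)%N ->
  \sum_(1 <= m < M.+1 | (k <= m)%N) (if (m < M)%N then g m - g m.+1 else g M) = g k.
Proof.
move=> /andP[k1 kM].
rewrite (big_cat_nat _ (n := k)) //=; last by apply: leq_trans kM _.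
rewrite big1_seq ?add0r; last first.
  move=> m /andP[hm]; rewrite mem_index_iota => /andP[_ hmk].
  by rewrite leqNgt hmk in hm.
rewrite big_mkcond (eq_big_nat _ _ (F2 := fun m => if (m < M)%N then g m - g m.+1 else g M)); last first.
  by move=> m /andP[->].
rewrite big_nat_recr //= ltnn.
rewrite (eq_big_nat _ _ (F2 := fun m => - (g m.+1 - g m))); last first.
  by move=> m /andP[_ ->]; rewrite opprB.
by rewrite sumrN telescope_sumr // opprB subrK.
Qed.

Lemma sum_cond1 (R : realType) (w : nat -> R) M :
  \sum_(1 <= m < M.+1 | (1 <= m)%N) w m = \sum_(1 <= m < M.+1) w m.
Proof.
by rewrite big_mkcond; apply: eq_big_nat => m /andP[-> _].
Qed.
Unset Implicit Arguments. Set Strict Implicit. Set Printing Implicit Defensive.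

Theorem mainTheorem13 (R : realType) (d : measure_display) (T : measurableType d)
  (P : probability T R) (n p M : nat) (X : 'M[R]_(n, p)) (nu : nat -> nat)
  (mu : 'cV[R]_n) (eps : 'I_n -> {RV P >-> R}) (Om : 'M[R]_n) :
  (* noise: mean zero, finite second moments, covariance Omega *)
  (forall i, (eps i : T -> R) \in Lfun P 2) ->
  (forall i, 'E_P[eps i]%E = 0%:E) ->
  (forall i j, covariance P (eps i) (eps j) = (Om i j)%:E) ->
  (* Omega positive definite *)
  Om^T = Om ->
  (forall x : 'cV[R]_n, x != 0 -> 0 < (x^T *m Om *m x) 0 0) ->
  (* nested candidate models 0 = nu_0 < nu_1 < ... < nu_M <= p, M >= 2 *)
  (2 <= M)%N ->
  nu 0%N = 0%N ->
  (forall m, (m < M)%N -> (nu m < nu m.+1)%N) ->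
  (nu M <= p)%N ->
  (* each X_m has full column rank *)
  (forall m, (1 <= m <= M)%N -> \rank (first_cols (nu m) X) = nu m) ->
  (* theta_{n,1} >= theta_{n,2} >= ... >= theta_{n,M} *)
  (forall m, (1 <= m < M)%N -> theta X nu mu Om m.+1 <= theta X nu mu Om m) ->
  let a := a_m X nu mu in
  let b := b_m X nu Om in
  let Rn := risk X nu M mu eps in
  let t1 := \tr (Pm X nu 1 *m Om) in
  let bias := (mu^T *m (1%:M - Pm X nu M) *m mu) 0 0 in
  let VW := t1 + \sum_(2 <= m < M.+1) (a m * b m / (a m + b m)) + bias in
  let VQ := \sum_(1 <= m < M.+1) (a m * b m / (a m + b m)) + bias in
  [/\ (* min over W_n, attained at wstar *)
      inW M (wstar X nu mu Om M) /\ Rn (wstar X nu mu Om M) = VW%:E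
        /\ (forall w, inW M w -> (VW%:E <= Rn w)%E),
      (* min over Q_n *)
      (exists2 w, inQ M w & Rn w = VQ%:E)
        /\ (forall w, inQ M w -> (VQ%:E <= Rn w)%E)
    & (* the difference *)
      VW - VQ = t1 ^+ 2 / ((mu^T *m Pm X nu 1 *m mu) 0 0 + t1)
        /\ t1 ^+ 2 / ((mu^T *m Pm X nu 1 *m mu) 0 0 + t1) <= t1].

Proof.
move=> h2 h0 hc hsym hpd hM2 hnu0 hnu hnuM hrank htheta a b Rn t1 bias VW VQ.
have ha : forall k, (1 <= k <= M)%N -> 0 <= a k by move=> k hk; exact: (a_ge0 mu hnu hrank hk).
have hb : forall k, (1 <= k <= M)%N -> 0 < b k by move=> k hk; exact: (@b_pos R n p X nu M Om hnu hrank hpd k hk).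
have hM1 : (1 <= M)%N by apply: leq_trans hM2.
have hn : (0 < n)%N.
  have r1 := hrank 1%N; rewrite hM1 /= in r1; have {}r1 := r1 isT.
  have := rank_leq_row (first_cols (nu 1%N) X); rewrite r1.
  have := hnu 0%N hM1; rewrite hnu0; lia.
have hN : 0 < (n%:R : R) by rewrite ltr0n.
have hRn : forall w, Rn w = (\sum_(1 <= k < M.+1)
     ((1 - \sum_(1 <= m < M.+1 | (k <= m)%N) w m) ^+ 2 * a k
      + (\sum_(1 <= m < M.+1 | (k <= m)%N) w m) ^+ 2 * b k) + bias)%:E.
  by move=> w; exact: (risk_formula mu h2 h0 hc hnu hrank w).
pose g k := a k / (a k + b k).
have gmon : forall k, (1 <= k < M)%N -> g k.+1 <= g k.
  move=> k /andP[k1 kM]; rewrite /g.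
  apply: (gmono hN); try (apply: ha || apply: hb); try lia.
  by have := htheta k; rewrite k1 kM; apply.
have g01' : forall k, (1 <= k <= M)%N -> 0 <= g k <= 1.
  by move=> k hk; apply: g01; [apply: ha | apply: hb].
have t1b : t1 = b 1%N by rewrite /t1 /b /b_m /= subr0.
have a1e : (mu^T *m Pm X nu 1 *m mu) 0 0 = a 1%N by rewrite /a /a_m /= subr0.
have hb1 := hb 1%N; rewrite hM1 /= in hb1; have {}hb1 := hb1 isT.
have ha1 := ha 1%N; rewrite hM1 /= in ha1; have {}ha1 := ha1 isT.
have VQe : VQ = a 1%N * b 1%N / (a 1%N + b 1%N)
    + \sum_(2 <= m < M.+1) (a m * b m / (a m + b m)) + bias.
  by rewrite /VQ big_ltn // ltnS.
have gam1 : gam X nu mu Om 1 = 1 by [].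
have gamk : forall k, (2 <= k)%N -> gam X nu mu Om k = g k.
  by move=> k hk; rewrite /gam leqNgt hk.
have wsum : forall k, (1 <= k <= M)%N ->
    \sum_(1 <= m < M.+1 | (k <= m)%N) wstar X nu mu Om M m = gam X nu mu Om k.
  by move=> k hk; exact: (wq_tele (gam X nu mu Om) hk).
have g2 := g01' 2%N; rewrite hM2 /= in g2; have {}g2 := g2 isT.
split.
- split; [split|split].
  + move=> m /andP[m1 mM]; rewrite /wstar; case: ltnP => hm.
      case: (eqVneq m 1%N) => [->|hm1].
        by rewrite gam1 gamk //; move/andP: g2 => [? ?]; apply/andP; split; lra.
      rewrite !gamk //; last by lia.
      have := gmon m; rewrite m1 hm => /(_ isT) gm.
      have := g01' m; rewrite m1 mM => /(_ isT) /andP[? ?].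
      have := g01' m.+1; rewrite hm => /(_ isT) /andP[? ?].
      by apply/andP; split; lra.
    by rewrite gamk //; apply: g01'; rewrite hM1 leqnn.
  + by rewrite -sum_cond1 wsum ?hM1.
  + rewrite hRn; congr (_%:E).
    rewrite (eq_big_nat _ _ (F2 := fun k => (1 - gam X nu mu Om k) ^+ 2 * a k
       + gam X nu mu Om k ^+ 2 * b k)); last first.
      by move=> k hk; rewrite wsum.
    rewrite big_ltn ?ltnS // gam1 /VW t1b subrr expr0n mul0r add0r expr1n mul1r.
    congr (_ + _ + _); apply: eq_big_nat => k /andP[k2 kM].
    rewrite gamk //; apply: quad_eq; [apply: ha | apply: hb]; lia.
  + move=> w [hw hs]; rewrite hRn lee_fin big_ltn ?ltnS // sum_cond1 hs subrr.
    rewrite expr0n mul0r add0r expr1n mul1r /VW t1b.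
    apply: lerD => //; apply: lerD => //.
    apply: ler_sum_nat => k /andP[k2 kM].
    apply: quad_lb; [apply: ha | apply: hb]; lia.
- pose wq m := if (m < M)%N then g m - g m.+1 else g M.
  have qsum : forall k, (1 <= k <= M)%N ->
      \sum_(1 <= m < M.+1 | (k <= m)%N) wq m = g k.
    by move=> k hk; exact: (wq_tele g hk).
  split.
    exists wq.
      move=> m /andP[m1 mM]; rewrite /wq; case: ltnP => hm.
        have := gmon m; rewrite m1 hm => /(_ isT) gm.
        have := g01' m; rewrite m1 mM => /(_ isT) /andP[? ?].
        have := g01' m.+1; rewrite hm => /(_ isT) /andP[? ?].
        by apply/andP; split; lra.
      by apply: g01'; rewrite hM1 leqnn.
    rewrite hRn; congr (_%:E); rewrite /VQ; congr (_ + _).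
    apply: eq_big_nat => k hk; rewrite qsum //.
    by apply: quad_eq; [apply: ha | apply: hb].
  move=> w hw; rewrite hRn lee_fin /VQ; apply: lerD => //.
  apply: ler_sum_nat => k hk.
  by apply: quad_lb; [apply: ha | apply: hb].
- rewrite a1e t1b.
  have hs : a 1%N + b 1%N != 0 by rewrite gt_eqF //; lra.
  split; last first.
    rewrite ler_pdivrMr; last lra.
    nra.
  rewrite VQe /VW t1b.
  set S := \sum_(2 <= m < M.+1) _.
  by field.
Qed.
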